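(* Assume the constraints $\mathcal A_{\mathbf w}$ are generic. For $\theta\in L_{\mathbb R}$ outside some locus of codimension $2$ (in particular, for every $\theta$ contained in at most one hyperplane of the form $n^\perp$ with $n\in\Lambda\setminus\{0\}$), every tropical disk type in $\mathfrak T_{\mathbf w}(\theta)$ is trivalent.
   Context: $\Lambda$ finite-rank lattice with skew form $\{\cdot,\cdot\}$, $L=\Lambda^\vee$, $p^*:\Lambda\to L$, $n\mapsto\{\cdot,n\}$; $\Lambda^+$ the nonzero elements of $\sigma\cap\Lambda$ for a strictly convex rational polyhedral cone $\sigma\subset\Lambda_{\mathbb R}$. $\{e_i\}_{i\in I}$ a finite collection of vectors in $\Lambda^+$, $v_i=p^*(e_i)$. A weight vector is $\mathbf w=(\mathbf w_i)_{i\in I}$, $\mathbf w_i=(w_{i1}\le\dots\le w_{il_i})$ positive integers. Tropical disks in $L_{\mathbb R}$: $\bar\Gamma$ a finite tree without bivalent vertices; $\Gamma$ the complement in $\bar\Gamma$ of all univalent vertices but one, $V_\infty$; positive integer weights $w$ on edges; a bijection $s\mapsto E_s$ from an index set $S$ to the non-compact edges; and a proper continuous map $h:\Gamma\to L_{\mathbb R}$ embedding each edge into an affine line of rational slope, balanced ($\sum_{E\ni V}w(E)u_{(V,E)}=0$, $u_{(V,E)}$ the primitive vector from $h(V)$ into $h(E)$) at every vertex $V\ne V_\infty$; up to isomorphism. Its type is the data $(\Gamma,w,\text{marking},(V,E)\mapsto u_{(V,E)})$; a type is trivalent if all vertices other than $V_\infty$ are trivalent. Degree $\Delta_{\mathbf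 w}$: $S=\{(i,j):i\in I,1\le j\le l_i\}$ and $w(E_{ij})u_{E_{ij}}=w_{ij}v_i$. Constraints $\mathcal A_{\mathbf w}=(A_{ij})$, $A_{ij}$ a translate of $e_i^\perp$ (generic, and mutually generic); $\delta\mathcal A_{\mathbf w}$ multiplies each $A_{ij}$ by $\delta>0$; a disk matches $\delta\mathcal A_{\mathbf w}$ if $h(E_{ij})\subset\delta A_{ij}$. $\mathfrak T_{\mathbf w,\delta}(\theta)$ is the set of types of disks of degree $\Delta_{\mathbf w}$ matching $\delta\mathcal A_{\mathbf w}$ with $h(V_\infty)=\theta$, and $\mathfrak T_{\mathbf w}(\theta)$ is the set of types $\tau$ such that for every $\epsilon>0$ and all sufficiently small $\delta>0$ there is $\theta'$ in the open $\epsilon$-ball about $\theta$ with $\tau\in\mathfrak T_{\mathbf w,\delta}(\theta')$. *)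

(* Defs.v *)
(* Lattice Lambda = Z^r (a chosen basis), L = Lambda^dual = Z^r
   (dual basis), L_R = R^r, all as row vectors. *)
From HB Require Import structures.
From mathcomp Require Import all_boot all_order all_algebra.
From mathcomp Require Import reals.
Set Implicit Arguments. Unset Strict Implicit. Unset Printing Implicit Defensive.
Import Order.TTheory GRing.Theory Num.Theory.
Local Open Scope ring_scope.

Definition rvec (R : realType) (r : nat) (n : 'rV[int]_r) : 'rV[R]_r :=
  map_mx (fun z : int => z%:~R) n.

Definition lpair (R : realType) (r : nat) (n : 'rV[int]_r) (x : 'rV[R]_r) : R :=
  \sum_(k < r) (n 0 k)%:~R * x 0 k.

(* skew form {m,n} = m B n^T, B skew-symmetric integer matrix *)
Definition skew_form (r : nat) (B : 'M[int]_r) : Prop := B^T = - B.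

(* p^* : Lambda -> L, n |-> {. , n}; (p^* n)_k = {delta_k, n} *)
Definition pstar (r : nat) (B : 'M[int]_r) (n : 'rV[int]_r) : 'rV[int]_r :=
  n *m B^T.

Definition primitive (r : nat) (u : 'rV[int]_r) : Prop :=
  u != 0 /\ forall (d : int) (v : 'rV[int]_r), u = d *: v -> `|d| = 1.

Definition in_cone (R : realType) (r k : nat) (g : 'I_k -> 'rV[int]_r)
    (x : 'rV[R]_r) : Prop :=
  exists lam : 'I_k -> R,
    (forall j, 0 <= lam j) /\ x = \sum_(j < k) lam j *: rvec R (g j).

Definition strictly_convex_cone (R : realType) (r k : nat)
    (g : 'I_k -> 'rV[int]_r) : Prop :=
  forall x : 'rV[R]_r, in_cone g x -> in_cone g (- x) -> x = 0.

Definition in_Lambda_plus (R : realType) (r k : nat) (g : 'I_k -> 'rV[int]_r)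
    (n : 'rV[int]_r) : Prop :=
  n != 0 /\ in_cone g (rvec R n).

Definition weight_vector_ok (m : nat) (l : 'I_m -> nat)
    (w : forall i, 'I_(l i) -> nat) : Prop :=
  forall i (j j' : 'I_(l i)),
    (0 < w i j)%N /\ ((j <= j')%N -> (w i j <= w i j')%N).

Definition Sidx (m : nat) (l : 'I_m -> nat) : finType := {i : 'I_m & 'I_(l i)}.

(* Vertices of Gamma are 'I_nv,
   V_infty = vinf; compact edges are 'I_ne with endpoints esrc/etgt, weight
   ewt and u_(esrc e, e) = edir e, u_(etgt e, e) = - edir e; the non-compact
   edges are indexed directly by the marking set S: leg s is the vertex
   E_s is attached to, lwt s its weight and ldir s = u_(leg s, E_s). *)
Record disk_type (r : nat) (S : finType) := DiskType {
  nv : nat;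
  ne : nat;
  vinf : 'I_nv;
  esrc : 'I_ne -> 'I_nv;
  etgt : 'I_ne -> 'I_nv;
  ewt : 'I_ne -> nat;
  edir : 'I_ne -> 'rV[int]_r;
  leg : S -> 'I_nv;
  lwt : S -> nat;
  ldir : S -> 'rV[int]_r }.
Arguments nv {r S} d.
Arguments ne {r S} d.
Arguments vinf {r S} d.
Arguments esrc {r S} d _.
Arguments etgt {r S} d _.
Arguments ewt {r S} d _.
Arguments edir {r S} d _.
Arguments leg {r S} d _.
Arguments lwt {r S} d _.
Arguments ldir {r S} d _.

Section DiskTypes.
Variables (r : nat) (S : finType) (t : disk_type r S).

Definition valence (v : 'I_(nv t)) : nat :=
  #|[set e | esrc t e == v]| + #|[set e | etgt t e == v]|
  + #|[set s | leg t s == v]|.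

Definition adj : rel 'I_(nv t) := fun x y =>
  [exists e, ((esrc t e == x) && (etgt t e == y))
             || ((esrc t e == y) && (etgt t e == x))].

Definition is_tree : Prop :=
  (forall x y, connect adj x y) /\ (ne t).+1 = nv t.

(* combinatorial well-formedness: bar Gamma a tree without bivalent vertices,
   V_infty univalent and the only univalent vertex kept in Gamma,
   positive weights, primitive integral directions *)
Definition type_ok : Prop :=
  [/\ is_tree,
      valence (vinf t) = 1%N,
      (forall v, v != vinf t -> (3 <= valence v)%N),
      (forall e, 0 < ewt t e)%N /\ (forall s, 0 < lwt t s)%N &
      (forall e, primitive (edir t e)) /\ (forall s, primitive (ldir t s))].

Definition trivalent : Prop := forall v, v != vinf t -> valence v = 3%N.

Definition balanced_at (v : 'I_(nv t)) : Prop :=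
  \sum_(e | esrc t e == v) (edir t e *+ ewt t e)
  - \sum_(e | etgt t e == v) (edir t e *+ ewt t e)
  + \sum_(s | leg t s == v) (ldir t s *+ lwt t s) = 0.

(* h : Gamma -> L_R given by vertex positions pos; compact edges are embedded
   segments of direction edir, legs are the rays pos(leg s) + R_{>=0} ldir s *)
Definition is_disk (R : realType) (pos : 'I_(nv t) -> 'rV[R]_r) : Prop :=
  (forall e, exists len : R, 0 < len /\
       pos (etgt t e) - pos (esrc t e) = len *: rvec R (edir t e))
  /\ (forall v, v != vinf t -> balanced_at v).

End DiskTypes.

(* tau in T_{w,delta}(theta): some disk of type tau, degree Delta_w, matching
   delta A_w (A_s = {x | <e_i, x> = c s}, s = (i,j)), with h(V_infty) = theta *)
Definition in_Twd (R : realType) (r : nat) (B : 'M[int]_r) (m : nat)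
    (e : 'I_m -> 'rV[int]_r) (l : 'I_m -> nat) (w : forall i, 'I_(l i) -> nat)
    (c : Sidx l -> R) (t : disk_type r (Sidx l)) (delta : R) (theta : 'rV[R]_r)
    : Prop :=
  type_ok t /\
  exists pos : 'I_(nv t) -> 'rV[R]_r,
    [/\ is_disk pos,
        (forall s : Sidx l,
            ldir t s *+ lwt t s = pstar B (e (tag s)) *+ w (tag s) (tagged s)),
        (forall (s : Sidx l) (u : R), 0 <= u ->
            lpair (e (tag s)) (pos (leg t s) + u *: rvec R (ldir t s))
            = delta * c s) &
        pos (vinf t) = theta].

Definition dist2 (R : realType) (r : nat) (x y : 'rV[R]_r) : R :=
  \sum_(k < r) (x 0 k - y 0 k) ^+ 2.

Definition in_Tw (R : realType) (r : nat) (B : 'M[int]_r) (m : nat)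
    (e : 'I_m -> 'rV[int]_r) (l : 'I_m -> nat) (w : forall i, 'I_(l i) -> nat)
    (c : Sidx l -> R) (t : disk_type r (Sidx l)) (theta : 'rV[R]_r) : Prop :=
  forall eps : R, 0 < eps ->
    exists d0 : R, 0 < d0 /\
      forall delta : R, 0 < delta -> delta < d0 ->
        exists theta' : 'rV[R]_r,
          dist2 theta' theta < eps ^+ 2 /\ in_Twd B e w c t delta theta'.

Definition at_most_one_hyperplane (R : realType) (r : nat) (theta : 'rV[R]_r)
    : Prop :=
  forall n n' : 'rV[int]_r, n != 0 -> n' != 0 ->
    lpair n theta = 0 -> lpair n' theta = 0 ->
    forall x : 'rV[R]_r, lpair n x = 0 <-> lpair n' x = 0.

(* P holds for generic constraint data c in R^S: outside a finite union of
   proper affine hyperplanes of R^S *)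
Definition generic_constraints (R : realType) (S : finType)
    (P : (S -> R) -> Prop) : Prop :=
  exists (N : nat) (a : 'I_N -> S -> R) (b : 'I_N -> R),
    (forall k, exists s, a k s != 0) /\
    forall c : S -> R, (forall k, \sum_s a k s * c s != b k) -> P c.

(* Main.v *)
Require Import Defs.
From HB Require Import structures.
From mathcomp Require Import all_boot all_order all_algebra.
From mathcomp Require Import reals.
From mathcomp Require Import zify ring lra.
From Stdlib Require Import ClassicalEpsilon.
Set Implicit Arguments. Unset Strict Implicit. Unset Printing Implicit Defensive.
Import Order.TTheory GRing.Theory Num.Theory.
Local Open Scope ring_scope.

Section Graph.
Variables (r : nat) (S : finType) (t : disk_type r S).

Lemma conn_const (X : Type) (f : 'I_(nv t) -> X) : is_tree t ->
  (forall e, f (esrc t e) = f (etgt t e)) -> forall x y, f x = f y.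
Proof.
move=> [Hc _] Hf x y; have /connectP [p Hp ->] := Hc x y.
elim: p x Hp => [|z p IH] x //= /andP [Hxz Hp].
rewrite -(IH z Hp).
by case/existsP: Hxz => e /orP [/andP [/eqP <- /eqP <-] | /andP [/eqP <- /eqP <-]].
Qed.

Lemma sum_card_src (p : 'I_(ne t) -> 'I_(nv t)) :
  (\sum_v #|[set e | p e == v]| = ne t)%N.
Proof.
transitivity (\sum_v \sum_(e | p e == v) 1)%N.
  by apply: eq_bigr => v _; rewrite -sum1_card; apply: eq_bigl => e; rewrite inE.
transitivity (\sum_(e : 'I_(ne t)) 1)%N; last by rewrite sum1_card card_ord.
by rewrite (partition_big p predT).
Qed.

Lemma sum_card_leg :
  (\sum_v #|[set s | leg t s == v]| = #|S|)%N.
Proof.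
transitivity (\sum_v \sum_(s | leg t s == v) 1)%N.
  by apply: eq_bigr => v _; rewrite -sum1_card; apply: eq_bigl => e; rewrite inE.
transitivity (\sum_(s : S) 1)%N; last by rewrite sum1_card.
by rewrite (partition_big (leg t) predT).
Qed.

Lemma handshake : (\sum_v valence (t:=t) v = 2 * ne t + #|S|)%N.
Proof.
rewrite /valence !big_split /= !sum_card_src sum_card_leg.
by rewrite mul2n -addnn.
Qed.


Lemma val_bound : type_ok t -> ((ne t).+1 <= #|S|)%N.
Proof.
case=> [[_ Hnv] Hvi Hv _ _].
have := handshake; rewrite (bigD1 (vinf t)) //= Hvi.
have: (\sum_(v | v != vinf t) 3 <= \sum_(v | v != vinf t) valence v)%N.
  by apply: leq_sum => v /Hv.
rewrite sum_nat_const cardC1 card_ord.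
have Hn : (nv t).-1 = ne t by rewrite -Hnv.
rewrite Hn; set X := (\sum_(v | v != vinf t) valence v)%N => H1 H2; lia.
Qed.

Lemma val_bound_nt : type_ok t -> ~ trivalent t -> ((ne t).+2 <= #|S|)%N.
Proof.
case=> [[_ Hnv] Hvi Hv _ _] Hnt.
have [v0 Hv0 Hne] : exists2 v0, v0 != vinf t & valence v0 != 3%N.
  case: (boolP [forall v, (v != vinf t) ==> (valence v == 3%N)]).
    move=> /forallP H; exfalso; apply: Hnt => v Hv1.
    by have /implyP /(_ Hv1) /eqP := H v.
  by move=> /forallPn [v0]; rewrite negb_imply => /andP [H1 H2]; exists v0.
have := handshake; rewrite (bigD1 (vinf t)) //= Hvi.
have: (\sum_(v | v != vinf t) (3 + (v == v0)) <= \sum_(v | v != vinf t) valence v)%N.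
  apply: leq_sum => v /[dup] Hvv /Hv; case: eqP => [->|_] /=; last by rewrite addn0.
  move=> H3; rewrite addn1 ltn_neqAle H3 andbT; by apply: contra Hne => /eqP <-.
rewrite big_split /= sum_nat_const cardC1 card_ord.
rewrite (bigD1 v0) //= eqxx big1 => [|v /andP [_ /negPf ->]] //.
have Hn : (nv t).-1 = ne t by rewrite -Hnv.
rewrite Hn => H1 H2; lia.
Qed.


Lemma sum_ind (F : nzRingType) (I : finType) (P : pred I) (h : I -> F) :
  \sum_i h i * (P i)%:R = \sum_(i | P i) h i.
Proof.
rewrite [RHS]big_mkcond; apply: eq_bigr => i _.
by case: (P i); rewrite ?mulr1 ?mulr0.
Qed.

Lemma sum_ind_l (F : nzRingType) (I : finType) (P : pred I) (h : I -> F) :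
  \sum_i (P i)%:R * h i = \sum_(i | P i) h i.
Proof.
rewrite [RHS]big_mkcond; apply: eq_bigr => i _.
by case: (P i); rewrite ?mul1r ?mul0r.
Qed.

Definition incid (F : nzRingType) : 'M[F]_(nv t, ne t) :=
  \matrix_(v, e) ((esrc t e == v)%:R - (etgt t e == v)%:R).

Lemma rank_incid (F : fieldType) : is_tree t -> \rank (incid F) = ne t.
Proof.
move=> Ht; apply/eqP; rewrite eqn_leq rank_leq_col /=.
have Hk : (kermx (incid F) <= (const_mx 1 : 'rV[F]_(nv t)))%MS.
  apply/row_subP => i; set x := row i _.
  have /sub_kermxP Hx : (x <= kermx (incid F))%MS by exact: row_sub.
  clearbody x.
  have Hc : forall e, x 0 (esrc t e) = x 0 (etgt t e).
    move=> e; have := congr1 (fun M : 'rV[F]_(ne t) => M 0 e) Hx; rewrite !mxE.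
    under eq_bigr do rewrite !mxE mulrBr.
    rewrite sumrB (sum_ind (fun v => esrc t e == v)) (sum_ind (fun v => etgt t e == v)).
    rewrite (big_pred1 (esrc t e)) ?(big_pred1 (etgt t e)) => [|v|v]; try by rewrite /= eq_sym.
    by move=> /eqP; rewrite subr_eq0 => /eqP.
  have -> : x = x 0 (vinf t) *: const_mx 1.
    apply/rowP => v; rewrite !mxE mulr1.
    by apply: (conn_const Ht (f := fun v => x 0 v)).
  by apply: scalemx_sub.
have := mxrankS Hk; rewrite mxrank_ker.
have := rank_leq_row (const_mx 1 : 'rV[F]_(nv t)).
case: Ht => _ Hn; set a := \rank (incid F); set b := \rank _; move: a b => a b; lia.
Qed.

Lemma tree_flow0 (F : fieldType) (g : 'I_(ne t) -> F) : is_tree t ->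
  (forall v, v != vinf t ->
     \sum_(e | esrc t e == v) g e - \sum_(e | etgt t e == v) g e = 0) ->
  forall e, g e = 0.
Proof.
move=> Ht Hd.
set div := fun v => \sum_(e | esrc t e == v) g e - \sum_(e | etgt t e == v) g e.
have Hall : forall v, div v = 0.
  have Hsum : \sum_v div v = 0.
    rewrite /div sumrB.
    have E1 : \sum_v \sum_(e | esrc t e == v) g e = \sum_e g e.
      by rewrite (partition_big (esrc t) predT).
    have E2 : \sum_v \sum_(e | etgt t e == v) g e = \sum_e g e.
      by rewrite (partition_big (etgt t) predT).
    by rewrite E1 E2 subrr.
  move=> v; case: (eqVneq v (vinf t)) => [->|]; last exact: Hd.
  have H1 : \sum_(v | v != vinf t) div v = 0 by apply: big1 => v' /Hd.
  by move: Hsum; rewrite (bigD1 (vinf t)) //= H1 addr0.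
set gr := \row_e g e.
have H0 : gr *m (incid F)^T = 0.
  apply/rowP => v; rewrite !mxE; transitivity (div v); last exact: Hall v.
  rewrite /div.
  under eq_bigr do rewrite !mxE mulrBr.
  by rewrite sumrB !sum_ind.
have Hrf : row_free (incid F)^T by rewrite /row_free mxrank_tr rank_incid.
have := row_free_inj Hrf (etrans H0 (esym (mul0mx _ _))).
move=> Hg e; have := congr1 (fun M : 'rV[F]_(ne t) => M 0 e) Hg; by rewrite !mxE.
Qed.

End Graph.

Lemma sum_enum (F : nmodType) (T : finType) (h : T -> F) :
  \sum_(i < #|T|) h (enum_val i) = \sum_x h x.
Proof. by rewrite -(big_enum_val (A := T)); apply: eq_bigl => x; rewrite inE. Qed.

Definition mkM (F : nzRingType) (X Y : finType) (c : X -> Y -> int) : 'M[F]_(#|X|, #|Y|) :=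
  \matrix_(i, j) (c (enum_val i) (enum_val j))%:~R.

Definition zrow (F : Type) (X : finType) (f : X -> F) : 'rV[F]_#|X| :=
  \row_i f (enum_val i).

Lemma mul_mk (F : nzRingType) (X Y : finType) (c : X -> Y -> int) (f : X -> F) y :
  (zrow f *m mkM F c) 0 (enum_rank y) = \sum_x f x * (c x y)%:~R.
Proof.
rewrite !mxE -[RHS]sum_enum; apply: eq_bigr => i _; by rewrite !mxE enum_rankK.
Qed.

Lemma zrowK (F : Type) (X : finType) (z : 'rV[F]_#|X|) :
  zrow (fun x => z 0 (enum_rank x)) = z.
Proof. by apply/rowP => i; rewrite !mxE enum_valK. Qed.

Definition intv (F : nzRingType) (r : nat) (n : 'rV[int]_r) : 'rV[F]_r :=
  map_mx (fun z : int => z%:~R) n.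

Section Mat.
Variables (r : nat) (S : finType) (t : disk_type r S) (eS : S -> 'rV[int]_r).

Definition VT : finType := (('I_(nv t) * 'I_r) + 'I_(ne t))%type.
Definition ET : finType := ('I_(ne t) * 'I_r)%type.
Definition PT : finType := ('I_r + 'I_(ne t))%type.

Definition cE (x : VT) (y : ET) : int :=
  match x with
  | inl (v, k') => if k' == y.2 then (etgt t y.1 == v)%:Z - (esrc t y.1 == v)%:Z else 0
  | inr e' => if e' == y.1 then - edir t y.1 0 y.2 else 0
  end.
Definition cL (x : VT) (s : S) : int :=
  match x with
  | inl (v, k) => if leg t s == v then eS s 0 k else 0
  | inr _ => 0
  end.
Definition cPi (x : VT) (k : 'I_r) : int :=
  match x with
  | inl (v, k') => if v == vinf t then (if k' == k then 1 else 0) else 0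
  | inr _ => 0
  end.
Definition cP (x : VT) (y : PT) : int :=
  match x, y with
  | inl (v, k'), inl k => if v == vinf t then (if k' == k then 1 else 0) else 0
  | inr e', inr e => if e' == e then 1 else 0
  | _, _ => 0
  end.

Section F.
Variable F : fieldType.
Definition AE := mkM F cE.
Definition AL := mkM F cL.
Definition APi : 'M[F]_(#|VT|, r) := \matrix_(i, k) (cPi (enum_val i) k)%:~R.
Definition AP := mkM F cP.

Definition posz (z : 'rV[F]_#|VT|) v : 'rV[F]_r := \row_k z 0 (enum_rank (inl (v, k) : VT)).
Definition lenz (z : 'rV[F]_#|VT|) e : F := z 0 (enum_rank (inr e : VT)).
Definition zof (pos : 'I_(nv t) -> 'rV[F]_r) (len : 'I_(ne t) -> F) : 'rV[F]_#|VT| :=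
  zrow (fun x : VT => match x with inl (v, k) => pos v 0 k | inr e => len e end).

Lemma posz_zof pos len v : posz (zof pos len) v = pos v.
Proof. by apply/rowP => k; rewrite !mxE enum_rankK. Qed.
Lemma lenz_zof pos len e : lenz (zof pos len) e = len e.
Proof. by rewrite /lenz !mxE enum_rankK. Qed.
Lemma zof_eta z : zof (posz z) (lenz z) = z.
Proof.
apply/rowP => i; rewrite /zof mxE.
by case E: (enum_val i) => [[v k]|e]; rewrite /posz /lenz ?mxE -E enum_valK.
Qed.


Lemma sum_VT (g : VT -> F) :
  \sum_x g x = \sum_v \sum_k g (inl (v, k)) + \sum_e g (inr e).
Proof. by rewrite big_sumType /= pair_bigA; congr (_ + _); apply: eq_bigr => -[]. Qed.

Lemma sum_if1 (I : finType) (j : I) (g : I -> F) (a : F) :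
  \sum_i g i * (if i == j then a else 0) = g j * a.
Proof.
rewrite (bigD1 j) //= eqxx big1 ?addr0 // => i /negPf ->; by rewrite mulr0.
Qed.

Lemma sum_if1' (I : finType) (j : I) (g : I -> F) (a : I -> F) :
  \sum_i g i * (if j == i then a i else 0) = g j * a j.
Proof.
rewrite (bigD1 j) //= eqxx big1 ?addr0 // => i; rewrite eq_sym => /negPf ->; by rewrite mulr0.
Qed.

Lemma sum_if1z (I : finType) (j : I) (g : I -> F) (a : int) :
  \sum_i g i * (if i == j then a else 0)%:~R = g j * a%:~R.
Proof.
rewrite (bigD1 j) //= eqxx big1 ?addr0 // => i /negPf ->; by rewrite mulr0.
Qed.

Lemma sum_pick (I : finType) (j : I) (g : I -> F) :
  \sum_i g i * (j == i)%:R = g j.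
Proof.
rewrite (bigD1 j) //= eqxx mulr1 big1 ?addr0 // => i; rewrite eq_sym => /negPf ->; by rewrite mulr0.
Qed.

Lemma AE_eval (z : 'rV[F]_#|VT|) e k :
  (z *m AE) 0 (enum_rank ((e, k) : ET)) =
  posz z (etgt t e) 0 k - posz z (esrc t e) 0 k - lenz z e * (edir t e 0 k)%:~R.
Proof.
rewrite -{1}(zrowK z) mul_mk sum_VT /=.
under eq_bigr do under eq_bigr do rewrite (fun_if (fun z : int => z%:~R : F)) intrB -!pmulrn.
under eq_bigr do rewrite sum_if1.
rewrite sum_if1z intrN mulrN.
under eq_bigr do rewrite mulrBr.
by rewrite sumrB !sum_pick /posz /lenz !mxE.
Qed.


Lemma sum_if1z' (I : finType) (j : I) (g : I -> F) (a : int) :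
  \sum_i g i * (if j == i then a else 0)%:~R = g j * a%:~R.
Proof.
rewrite (bigD1 j) //= eqxx big1 ?addr0 // => i; rewrite eq_sym => /negPf ->; by rewrite mulr0.
Qed.

Lemma AL_eval (z : 'rV[F]_#|VT|) s :
  (z *m AL) 0 (enum_rank s) = \sum_k (eS s 0 k)%:~R * posz z (leg t s) 0 k.
Proof.
rewrite -{1}(zrowK z) mul_mk sum_VT /= [X in _ + X]big1 ?addr0 => [|e _]; last by rewrite mulr0.
rewrite exchange_big /=; apply: eq_bigr => k _.
by rewrite sum_if1z' mulrC /posz mxE.
Qed.

Lemma vinf_sum (g : 'I_(nv t) -> 'I_r -> F) k :
  \sum_v \sum_k' g v k' * (if v == vinf t then (if k' == k then 1 else 0) else 0)%:~R
  = g (vinf t) k.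
Proof.
rewrite (eq_bigr (fun v => if v == vinf t then g v k else 0)); last first.
  move=> v _; case: eqP => _; first by rewrite sum_if1z mulr1.
  by rewrite big1 // => k' _; rewrite mulr0.
by rewrite -big_mkcond big_pred1_eq.
Qed.

Lemma APi_eval (z : 'rV[F]_#|VT|) : z *m APi = posz z (vinf t).
Proof.
apply/rowP => k; rewrite -{1}(zrowK z) !mxE.
rewrite (eq_bigr (fun i => (fun x => z 0 (enum_rank x) * (cPi x k)%:~R) (enum_val i))); last by move=> i _; rewrite !mxE.
rewrite (sum_enum (fun x => z 0 (enum_rank x) * (cPi x k)%:~R)) sum_VT /=.
rewrite [X in _ + X]big1 ?addr0 => [|e _]; last by rewrite mulr0.
by rewrite vinf_sum /posz ?mxE.
Qed.

Lemma AP_eval1 (z : 'rV[F]_#|VT|) k :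
  (z *m AP) 0 (enum_rank (inl k : PT)) = posz z (vinf t) 0 k.
Proof.
rewrite -{1}(zrowK z) mul_mk sum_VT /=.
rewrite [X in _ + X]big1 ?addr0 => [|e _]; last by rewrite mulr0.
by rewrite vinf_sum /posz !mxE.
Qed.

Lemma AP_eval2 (z : 'rV[F]_#|VT|) e :
  (z *m AP) 0 (enum_rank (inr e : PT)) = lenz z e.
Proof.
rewrite -{1}(zrowK z) mul_mk sum_VT /=.
rewrite [X in X + _]big1 ?add0r => [|v _]; last by rewrite big1 // => k _; rewrite mulr0.
by rewrite sum_if1z mulr1.
Qed.

Lemma AE0P (z : 'rV[F]_#|VT|) :
  (z *m AE == 0) = [forall e, posz z (etgt t e) - posz z (esrc t e) == lenz z e *: intv F (edir t e)].
Proof.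
apply/eqP/forallP => [H e|H].
  apply/eqP/rowP => k; have := congr1 (fun M : 'rV[F]_#|ET| => M 0 (enum_rank ((e, k) : ET))) H.
  rewrite AE_eval !mxE => /eqP; rewrite subr_eq0 => /eqP ->; by rewrite mulrC.
apply/rowP => j; rewrite -(enum_valK j); case: (enum_val j) => e k.
rewrite AE_eval mxE; have := congr1 (fun M : 'rV[F]_r => M 0 k) (eqP (H e)).
rewrite !mxE => ->; by rewrite mulrC subrr.
Qed.

Lemma rank_K : is_tree t -> (\rank (kermx AE) <= r + ne t)%N.
Proof.
move=> Ht.
have H0 : \rank (kermx AE :&: kermx AP)%MS = 0%N.
  apply/eqP; rewrite mxrank_eq0 -submx0; apply/row_subP => i.
  have := row_sub i (kermx AE :&: kermx AP)%MS; set z := row i _ => Hz; clearbody z.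
  rewrite sub_capmx !sub_kermx in Hz; case/andP: Hz; rewrite AE0P => /forallP He /eqP Hp.
  have Hl : forall e, lenz z e = 0.
    by move=> e; rewrite -AP_eval2 Hp mxE.
  have Hv : posz z (vinf t) = 0.
    by apply/rowP => k; rewrite -AP_eval1 Hp !mxE.
  have Hc : forall v, posz z v = posz z (vinf t).
    move=> v; apply: (conn_const Ht (f := posz z)) => e.
    by have /eqP := He e; rewrite Hl scale0r => /eqP; rewrite subr_eq0 => /eqP ->.
  rewrite submx0 -(zof_eta z); apply/eqP/rowP => j; rewrite !mxE.
  by case: (enum_val j) => [[v k]|e]; rewrite ?Hl // Hc Hv mxE.
have := mxrank_mul_ker (kermx AE) AP; rewrite H0 addn0 => <-.
have Hc : #|PT| = (r + ne t)%N by rewrite card_sum !card_ord.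
rewrite -Hc; exact: rank_leq_col.
Qed.

End F.
End Mat.

Lemma two_annih (F : fieldType) (m r : nat) (V : 'M[F]_(m, r)) :
  (\rank V + 2 <= r)%N ->
  exists q1 q2 : 'rV[F]_r, [/\ q1 != 0, ~~ (q2 <= q1)%MS, V *m q1^T = 0 & V *m q2^T = 0].
Proof.
move=> Hr; set W := kermx V^T.
have HW : (2 <= \rank W)%N by rewrite mxrank_ker mxrank_tr; lia.
have Hrow : forall i, V *m (row i W)^T = 0.
  move=> i; have /sub_kermxP H := row_sub i W.
  by rewrite -[V]trmxK -trmx_mul H trmx0.
have [i Hi] : exists i, row i W != 0.
  apply/existsP; apply: contraLR HW; rewrite negb_exists => /forallP H.
  have : (W <= (0 : 'M[F]_r))%MS.
    by apply/row_subP => i; have := H i; rewrite negbK => /eqP ->; rewrite sub0mx.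
  by rewrite submx0 => /eqP ->; rewrite mxrank0.
have [j Hj] : exists j, ~~ (row j W <= row i W)%MS.
  apply/existsP; apply: contraLR HW; rewrite negb_exists => /forallP H.
  have : (W <= row i W)%MS by apply/row_subP => j; have := H j; rewrite negbK.
  move/mxrankS; have := rank_leq_row (row i W); lia.
by exists (row i W), (row j W); split.
Qed.

Definition lp (R : nzRingType) (r : nat) (u x : 'rV[R]_r) : R := \sum_k u 0 k * x 0 k.

Lemma lp_prop (R : realType) (r : nat) (u1 u2 : 'rV[R]_r) :
  u1 != 0 -> (forall x, lp u1 x = 0 <-> lp u2 x = 0) -> (u2 <= u1)%MS.
Proof.
move=> Hu H.
set a := lp u1 u1.
have Ha : a != 0.
  apply: contra Hu => /eqP Ha; apply/eqP/rowP => k; rewrite mxE.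
  have Hp : forall k, 0 <= u1 0 k * u1 0 k by move=> k'; rewrite -expr2 sqr_ge0.
  have := psumr_eq0P (P := predT) (fun i _ => Hp i) Ha (i := k) isT.
  by move/eqP; rewrite mulf_eq0 orbb => /eqP.
set lam := lp u2 u1 / a.
have Hx : forall x, lp u2 x = lam * lp u1 x.
  move=> x; set b := lp u1 x.
  have H0 : lp u1 (x - (b / a) *: u1) = 0.
    rewrite /lp; under eq_bigr do rewrite !mxE mulrBr.
    rewrite sumrB.
    have E : \sum_i u1 0 i * (b / a * u1 0 i) = b / a * a.
      by rewrite /a /lp mulr_sumr; apply: eq_bigr => i _; rewrite mulrCA.
    by rewrite E -/(lp u1 x) -/b mulrAC -mulrA divff // mulr1 subrr.
  have /H := H0; rewrite /lp; under eq_bigr do rewrite !mxE mulrBr.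
  rewrite sumrB.
  have E : \sum_i u2 0 i * (b / a * u1 0 i) = b / a * lp u2 u1.
    by rewrite /lp mulr_sumr; apply: eq_bigr => i _; rewrite mulrCA.
  rewrite E -/(lp u2 x) => /eqP; rewrite subr_eq0 => /eqP ->.
  by rewrite /lam mulrAC [RHS]mulrC mulrA.
have -> : u2 = lam *: u1.
  apply/rowP => k; have := Hx (delta_mx 0 k); rewrite /lp.
  rewrite (bigD1 k) //= big1 => [|k' Hk']; last by rewrite mxE (negPf Hk') andbF mulr0.
  rewrite (bigD1 k) //= big1 => [|k' Hk']; last by rewrite mxE (negPf Hk') andbF mulr0.
  by rewrite !mxE !eqxx /= !mulr1 !addr0.
exact: scalemx_sub.
Qed.

Definition intscale (r : nat) (q : 'rV[rat]_r) : 'rV[int]_r :=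
  \row_k (numq (q 0 k) * \prod_(j | j != k) denq (q 0 j)).

Lemma intscaleE (R : realType) (r : nat) (q : 'rV[rat]_r) :
  intv R (intscale q) = ((\prod_j denq (q 0 j))%:~R : R) *: map_mx ratr q.
Proof.
apply/rowP => k; rewrite !mxE [in RHS](bigD1 k) //= !intrM.
have -> : (numq (q 0 k))%:~R = ratr (q 0 k) * (denq (q 0 k))%:~R :> R.
  by have := congr1 (ratr : rat -> R) (numqE (q 0 k)); rewrite rmorphM /= !ratr_int.
ring.
Qed.

Lemma prod_den_neq0 (R : realType) (r : nat) (q : 'rV[rat]_r) :
  ((\prod_j denq (q 0 j))%:~R : R) != 0.
Proof.
rewrite intr_eq0; apply/prodf_neq0 => j _; exact: denq_neq0.
Qed.

Lemma intscale_neq0 (R : realType) (r : nat) (q : 'rV[rat]_r) :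
  q != 0 -> intscale q != 0.
Proof.
move=> Hq; apply/eqP => H0.
have := intscaleE R q; rewrite H0.
have -> : intv R (0 : 'rV[int]_r) = 0 by apply/rowP => k; rewrite !mxE.
move/esym/eqP; rewrite scaler_eq0 (negPf (prod_den_neq0 R q)) /= map_mx_eq0.
by rewrite (negPf Hq).
Qed.

Lemma lpairE (R : realType) (r : nat) (n : 'rV[int]_r) (x : 'rV[R]_r) :
  lpair n x = lp (intv R n) x.
Proof. by rewrite /lpair /lp; apply: eq_bigr => k _; rewrite mxE. Qed.

Lemma test_map (R : realType) m n (A : 'M[rat]_(m, n)) :
  map_mx ratr (kermx A) = kermx (map_mx (ratr : rat -> R) A).
Proof. by rewrite map_kermx. Qed.

Lemma map_mkM (R : realType) (X Y : finType) (c : X -> Y -> int) :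
  map_mx (ratr : rat -> R) (mkM rat c) = mkM R c.
Proof. by apply/matrixP => i j; rewrite !mxE ratr_int. Qed.

Section RealS.
Variables (R : realType) (r : nat) (S : finType) (t : disk_type r S) (eS : S -> 'rV[int]_r).

Lemma map_APi : map_mx (ratr : rat -> R) (APi t rat) = APi t R.
Proof. by apply/matrixP => i j; rewrite !mxE ratr_int. Qed.

Definition edges_ok (pos : 'I_(nv t) -> 'rV[R]_r) (len : 'I_(ne t) -> R) :=
  forall e, pos (etgt t e) - pos (esrc t e) = len e *: rvec R (edir t e).

Definition Real (y : S -> R) := exists pos len,
  edges_ok pos len /\ forall s, lpair (eS s) (pos (leg t s)) = y s.

Definition yrow (y : S -> R) : 'rV[R]_#|S| := \row_j y (enum_val j).

Lemma zof_AE pos len : edges_ok pos len -> zof pos len *m AE t R = 0.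
Proof.
move=> H; apply/eqP; rewrite AE0P; apply/forallP => e.
by rewrite !posz_zof lenz_zof H.
Qed.

Lemma zof_AL pos len :
  zof pos len *m AL t eS R = yrow (fun s => lpair (eS s) (pos (leg t s))).
Proof.
apply/rowP => j; rewrite -(enum_valK j) AL_eval posz_zof mxE enum_valK.
by rewrite /lpair.
Qed.

Lemma Real_sub y : Real y -> (yrow y <= kermx (AE t R) *m AL t eS R)%MS.
Proof.
move=> [pos [len [He Hl]]].
have /submxP [w Hw] : (zof pos len <= kermx (AE t R))%MS.
  by apply/sub_kermxP; exact: zof_AE.
apply/submxP; exists w; rewrite mulmxA -Hw zof_AL.
by apply/rowP => j; rewrite !mxE Hl.
Qed.

Lemma sub_Real y : (yrow y <= kermx (AE t R) *m AL t eS R)%MS -> Real y.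
Proof.
move/submxP => [w Hw]; set z := w *m kermx (AE t R).
have Hz : z *m AE t R == 0 by rewrite -mulmxA mulmx_ker mulmx0.
rewrite AE0P in Hz; move/forallP: Hz => Hz.
exists (posz z), (lenz z); split.
  by move=> e; rewrite (eqP (Hz e)).
move=> s; have := congr1 (fun M : 'rV[R]_#|S| => M 0 (enum_rank s)) Hw.
by rewrite mulmxA -/z AL_eval !mxE enum_rankK /lpair => ->.
Qed.


Definition prop_ok (n : 'rV[int]_r) := forall (d1 d2 : R) (c : S -> R) pos1 len1 pos2 len2,
  edges_ok pos1 len1 -> edges_ok pos2 len2 ->
  (forall s, lpair (eS s) (pos1 (leg t s)) = d1 * c s) ->
  (forall s, lpair (eS s) (pos2 (leg t s)) = d2 * c s) ->
  d1 * lpair n (pos2 (vinf t)) = d2 * lpair n (pos1 (vinf t)).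

Lemma dim_case : type_ok t -> ~ trivalent t -> (forall y, Real y) ->
  exists n1 n2 : 'rV[int]_r, [/\ n1 != 0, n2 != 0,
    ~ (forall x : 'rV[R]_r, lpair n1 x = 0 <-> lpair n2 x = 0),
    prop_ok n1 & prop_ok n2].
Proof.
move=> Hok Hnt Hfull.
set V0Q := ((kermx (AE t rat)) :&: kermx (AL t eS rat))%MS *m APi t rat.
set V0R := map_mx (ratr : rat -> R) V0Q.
have HmapV : (V0R :=: ((kermx (AE t R)) :&: kermx (AL t eS R))%MS *m APi t R)%MS.
  rewrite /V0R map_mxM map_APi; apply: eqmxMr.
  apply: eqmx_trans (map_capmx _ _ _) _.
  rewrite !map_kermx /AE /AL !map_mkM; exact: eqmx_refl.
have Hrk : (\rank V0Q + 2 <= r)%N.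
  rewrite -(mxrank_map (ratr : {rmorphism rat -> R})) -/V0R HmapV.
  have Hrf : row_full (kermx (AE t R) *m AL t eS R).
    rewrite -sub1mx; apply/row_subP => i; rewrite row1.
    have -> : delta_mx 0 i = yrow (fun s => (enum_rank s == i)%:R).
      by apply/rowP => j; rewrite !mxE enum_valK.
    exact/Real_sub/Hfull.
  have := mxrank_mul_ker (kermx (AE t R)) (AL t eS R); rewrite (eqP Hrf).
  have := rank_K R (let: And5 H _ _ _ _ := Hok in H).
  have := val_bound_nt Hok Hnt.
  have := mxrankM_maxl ((kermx (AE t R)) :&: kermx (AL t eS R))%MS (APi t R).
  lia.
have [q1 [q2 [Hq1 Hq2 HV1 HV2]]] := two_annih Hrk.
have Hprop : forall q, V0Q *m q^T = 0 -> prop_ok (intscale q).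
  move=> q Hq d1 d2 c pos1 len1 pos2 len2 He1 He2 Hl1 Hl2.
  set z1 := zof pos1 len1; set z2 := zof pos2 len2; set x := d1 *: z2 - d2 *: z1.
  have HxE : x *m AE t R = 0 by rewrite mulmxBl -!scalemxAl !zof_AE // !scaler0 subrr.
  have HxL : x *m AL t eS R = 0.
    rewrite mulmxBl -!scalemxAl !zof_AL; apply/rowP => j; rewrite !mxE Hl1 Hl2.
    by rewrite mulrCA subrr.
  have Hx : (x <= kermx (AE t R) :&: kermx (AL t eS R))%MS.
    by rewrite sub_capmx; apply/andP; split; apply/sub_kermxP.
  have /submxP [w Hw] : (x *m APi t R <= V0R)%MS.
    have := submxMr (APi t R) Hx; by rewrite -HmapV.
  have H0 : x *m APi t R *m (intv R (intscale q))^T = 0.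
    rewrite Hw intscaleE linearZ /= -scalemxAr -mulmxA map_trmx -map_mxM Hq map_mx0.
    by rewrite mulmx0 scaler0.
  rewrite mulmxBl -!scalemxAl !APi_eval !posz_zof in H0.
  have := congr1 (fun M : 'M[R]_1 => M 0 0) H0; rewrite !mxE => H1.
  rewrite !lpairE /lp; apply/eqP; rewrite -subr_eq0 !mulr_sumr -sumrB; apply/eqP.
  rewrite -[RHS]H1; apply: eq_bigr => k _; rewrite !mxE; ring.
exists (intscale q1), (intscale q2); split.
- exact: (intscale_neq0 R).
- by apply: (intscale_neq0 R); apply/eqP => Hq0; move: Hq2; rewrite Hq0 sub0mx.
- move=> Heq.
  have Hu1 : intv R (intscale q1) != 0.
    rewrite intscaleE scaler_eq0 negb_or prod_den_neq0 /= map_mx_eq0 //.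
  have Heq' : forall x, lp (intv R (intscale q1)) x = 0 <-> lp (intv R (intscale q2)) x = 0.
    by move=> x; rewrite -!lpairE.
  have := lp_prop Hu1 Heq'.
  rewrite !intscaleE !(eqmx_scale _ (prod_den_neq0 _ _)) map_submx.
  by rewrite (negPf Hq2).
- exact: Hprop.
- exact: Hprop.
Qed.

End RealS.

Section Code.
Variables (r : nat) (S : finType) (L : S -> 'rV[int]_r).

Definition good (t : disk_type r S) :=
  [/\ type_ok t, (forall v, v != vinf t -> balanced_at v) &
      (forall s, ldir t s *+ lwt t s = L s)].

Definition natf (n : nat) (f : 'I_n -> nat) (i : nat) : nat :=
  if insub i is Some x then f x else 0%N.

Lemma natfE n (f : 'I_n -> nat) (x : 'I_n) : natf f x = f x.
Proof. by rewrite /natf valK. Qed.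

Definition codeT : finType :=
  ('I_#|S|.+1 * 'I_#|S|.+1 * {ffun 'I_#|S| -> 'I_#|S|.+1}
    * {ffun 'I_#|S| -> 'I_#|S|.+1} * {ffun S -> 'I_#|S|.+1})%type.

Definition code (t : disk_type r S) : codeT :=
  (inord (nv t), inord (vinf t),
   [ffun i : 'I_#|S| => inord (natf (fun e => val (esrc t e)) i)],
   [ffun i : 'I_#|S| => inord (natf (fun e => val (etgt t e)) i)],
   [ffun s => inord (leg t s)]).

Lemma nv_bound (t : disk_type r S) : type_ok t -> (nv t <= #|S|)%N.
Proof. move=> H; have := val_bound H; case: H => -[_ E] _ _ _ _; lia. Qed.

Lemma inord_inj n a b : (a <= n)%N -> (b <= n)%N -> inord a = inord b :> 'I_n.+1 -> a = b.
Proof. by move=> Ha Hb /(congr1 (@nat_of_ord _)); rewrite !inordK. Qed.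

Lemma code_eq (t t' : disk_type r S) : type_ok t -> type_ok t' -> code t = code t' ->
  exists (Hnv : nv t = nv t') (Hne : ne t = ne t'),
  [/\ vinf t' = cast_ord Hnv (vinf t),
      (forall e, esrc t' (cast_ord Hne e) = cast_ord Hnv (esrc t e)),
      (forall e, etgt t' (cast_ord Hne e) = cast_ord Hnv (etgt t e)) &
      (forall s, leg t' s = cast_ord Hnv (leg t s))].
Proof.
move=> H H' [Hn Hvi Hs Ht Hl].
have B := nv_bound H; have B' := nv_bound H'.
have Hnv : nv t = nv t' by apply: inord_inj Hn.
have Hne : ne t = ne t'.
  by case: H => -[_ E] _ _ _ _; case: H' => -[_ E'] _ _ _ _; apply/eq_add_S; rewrite E E'.
exists Hnv, Hne; split.
- apply/val_inj => /=; symmetry; apply: inord_inj Hvi.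
  + exact: leq_trans (ltnW (ltn_ord (vinf t))) _.
  + exact: leq_trans (ltnW (ltn_ord (vinf t'))) _.
- move=> e; apply/val_inj => /=.
  have He : (e < #|S|)%N by have := ltn_ord e; case: H => -[_ E] _ _ _ _; lia.
  have := congr1 (fun f : {ffun 'I_#|S| -> 'I_#|S|.+1} => f (Ordinal He)) Hs; rewrite !ffunE /=.
  have E1 : natf (fun e0 : 'I_(ne t') => val (esrc t' e0)) (val e) = val (esrc t' (cast_ord Hne e)).
    exact: (natfE _ (cast_ord Hne e)).
  rewrite E1 natfE.
  move=> Hin; symmetry; apply: (inord_inj _ _ Hin).
  + exact: leq_trans (ltnW (ltn_ord (esrc t e))) _.
  + exact: leq_trans (ltnW (ltn_ord (esrc t' (cast_ord Hne e)))) _.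
- move=> e; apply/val_inj => /=.
  have He : (e < #|S|)%N by have := ltn_ord e; case: H => -[_ E] _ _ _ _; lia.
  have := congr1 (fun f : {ffun 'I_#|S| -> 'I_#|S|.+1} => f (Ordinal He)) Ht; rewrite !ffunE /=.
  have E1 : natf (fun e0 : 'I_(ne t') => val (etgt t' e0)) (val e) = val (etgt t' (cast_ord Hne e)).
    exact: (natfE _ (cast_ord Hne e)).
  rewrite E1 natfE.
  move=> Hin; symmetry; apply: (inord_inj _ _ Hin).
  + exact: leq_trans (ltnW (ltn_ord (etgt t e))) _.
  + exact: leq_trans (ltnW (ltn_ord (etgt t' (cast_ord Hne e)))) _.
- move=> s; apply/val_inj => /=.
  have := congr1 (fun f : {ffun S -> 'I_#|S|.+1} => f s) Hl; rewrite !ffunE.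
  move=> Hin; symmetry; apply: (inord_inj _ _ Hin).
  + exact: leq_trans (ltnW (ltn_ord (leg t s))) _.
  + exact: leq_trans (ltnW (ltn_ord (leg t' s))) _.
Qed.


Lemma cast_bij n m (H : n = m) : bijective (cast_ord H).
Proof. exact: (Bijective (cast_ordK H) (cast_ordKV H)). Qed.

Variables (R : realType) (eS : S -> 'rV[int]_r).

Lemma transport (t t' : disk_type r S) : good t -> good t' -> code t = code t' ->
  forall y, @Real R r S t' eS y -> @Real R r S t eS y.
Proof.
move=> Hg Hg' Hc y [pos' [len' [He' Hl']]].
case: (Hg) => Hok Hbal HL; case: (Hg') => Hok' Hbal' HL'.
have [Hnv [Hne [Hvi Hs Ht Hlg]]] := code_eq Hok Hok' Hc.
set ce := cast_ord Hne; set cv := cast_ord Hnv.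
have cvinj : injective cv := @cast_ord_inj _ _ Hnv.
have Hf : forall e, edir t' (ce e) *+ ewt t' (ce e) = edir t e *+ ewt t e.
  move=> e; apply/rowP => k; apply/eqP; rewrite -(eqr_int R); apply/eqP; symmetry.
  have Htr : is_tree t by case: Hok.
  set a := fun e => ((edir t e *+ ewt t e) 0 k)%:~R : R.
  set b := fun e => ((edir t' (ce e) *+ ewt t' (ce e)) 0 k)%:~R : R.
  suff Hz : forall e, a e - b e = 0 by move: (Hz e) => /eqP; rewrite subr_eq0 => /eqP.
  apply: (tree_flow0 Htr) => v Hv.
  have Hv' : cv v != vinf t' by rewrite Hvi (inj_eq cvinj).
  have B1 := Hbal v Hv; have B2 := Hbal' (cv v) Hv'.
  rewrite /balanced_at in B1 B2.
  rewrite (reindex ce) /= in B2; last exact: onW_bij (cast_bij Hne).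
  rewrite (reindex ce) /= in B2; last exact: onW_bij (cast_bij Hne).
  have E1 : \sum_(e | esrc t' (ce e) == cv v) (edir t' (ce e) *+ ewt t' (ce e))
         = \sum_(e | esrc t e == v) (edir t' (ce e) *+ ewt t' (ce e)).
    by apply: eq_bigl => e'; rewrite Hs (inj_eq cvinj).
  have E2 : \sum_(e | etgt t' (ce e) == cv v) (edir t' (ce e) *+ ewt t' (ce e))
         = \sum_(e | etgt t e == v) (edir t' (ce e) *+ ewt t' (ce e)).
    by apply: eq_bigl => e'; rewrite Ht (inj_eq cvinj).
  have E3 : \sum_(s | leg t' s == cv v) (ldir t' s *+ lwt t' s)
         = \sum_(s | leg t s == v) (ldir t s *+ lwt t s).
    by apply: eq_big => [s|s _]; rewrite ?Hlg ?(inj_eq cvinj) ?HL ?HL'.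
  rewrite E1 E2 E3 in B2.
  have := congr1 (fun M : 'rV[int]_r => (M 0 k)%:~R : R) B1.
  have := congr1 (fun M : 'rV[int]_r => (M 0 k)%:~R : R) B2.
  rewrite !mxE !summxE /= !rmorphD !rmorphN /= !rmorph_sum /= => H2 H1.
  rewrite !sumrB /a /b; lra.
have Hd : forall e, rvec R (edir t' (ce e)) =
    ((ewt t e)%:R / (ewt t' (ce e))%:R) *: rvec R (edir t e).
  move=> e; have Hw' : ((ewt t' (ce e))%:R : R) != 0.
    by rewrite pnatr_eq0 -lt0n; case: Hok' => _ _ _ [-> _].
  apply/rowP => k; rewrite !mxE.
  have := congr1 (fun M : 'rV[int]_r => (M 0 k)%:~R : R) (Hf e).
  rewrite /= !mulmxnE !rmorphMn /=.
  set a := (edir t' (ce e) 0 k)%:~R; set b := (edir t e 0 k)%:~R.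
  rewrite -(mulr_natr a) -(mulr_natr b) => H.
  apply: (mulIf Hw'); by rewrite H mulrAC divfK // mulrC.
exists (fun v => pos' (cv v)), (fun e => len' (ce e) * ((ewt t e)%:R / (ewt t' (ce e))%:R)).
split.
  move=> e; rewrite /cv -Hs -Ht He' Hd scalerA //.
move=> s; by rewrite -Hl' Hlg.
Qed.



Lemma hyp_case (t : disk_type r S) : good t -> (exists y0, ~ @Real R r S t eS y0) ->
  exists a : S -> R, (exists s, a s != 0) /\
    forall t', good t' -> code t' = code t -> forall y, @Real R r S t' eS y ->
      \sum_s a s * y s = 0.
Proof.
move=> Hg [y0 Hy0].
set M := kermx (AE t R) *m AL t eS R.
have Hnf : ~~ row_full M.
  apply/negP => Hf; apply: Hy0; apply: sub_Real; exact: submx_full.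
set W := kermx M^T.
have HW : (0 < \rank W)%N.
  rewrite mxrank_ker mxrank_tr; move: Hnf; rewrite /row_full.
  have := rank_leq_col M; lia.
have [i Hi] : exists i, row i W != 0.
  apply/existsP; apply: contraLR HW; rewrite negb_exists => /forallP H.
  have : (W <= (0 : 'M[R]_#|S|))%MS.
    by apply/row_subP => i; have := H i; rewrite negbK => /eqP ->; rewrite sub0mx.
  by rewrite submx0 => /eqP ->; rewrite mxrank0.
set u := row i W.
have Hu : M *m u^T = 0.
  have /sub_kermxP H := row_sub i W.
  by rewrite -[M]trmxK -trmx_mul H trmx0.
exists (fun s => u 0 (enum_rank s)); split.
  move: Hi; rewrite -/u => Hi.
  have [j Hj] : exists j, u 0 j != 0.
    apply/existsP; apply: contraR Hi; rewrite negb_exists => /forallP H.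
    by apply/eqP/rowP => j; have := H j; rewrite negbK => /eqP ->; rewrite mxE.
  by exists (enum_val j); rewrite enum_valK.
move=> t' Hg' Hc y Hy.
have /Real_sub /submxP [w Hw] := transport Hg Hg' (esym Hc) Hy.
have : yrow y *m u^T = 0 by rewrite Hw -mulmxA Hu mulmx0.
move/(congr1 (fun N : 'M[R]_1 => N 0 0)); rewrite !mxE => H.
rewrite -[RHS]H -(sum_enum (fun s => u 0 (enum_rank s) * y s)).
by apply: eq_bigr => j _; rewrite !mxE enum_valK mulrC.
Qed.

End Code.

Lemma coord_bound (R : realType) (r : nat) (x y : 'rV[R]_r) (eps : R) :
  0 < eps -> dist2 x y < eps ^+ 2 -> forall k, `|x 0 k - y 0 k| <= eps.
Proof.
move=> He Hd k.
have Hk : (x 0 k - y 0 k) ^+ 2 <= dist2 x y.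
  rewrite /dist2 (bigD1 k) //= lerDl; apply: sumr_ge0 => i _; exact: sqr_ge0.
have H2 : (x 0 k - y 0 k) ^+ 2 < eps ^+ 2 by exact: le_lt_trans Hk Hd.
set z := x 0 k - y 0 k in H2 *.
rewrite ler_norml; apply/andP; split; nra.
Qed.

Lemma lpair_diff (R : realType) (r : nat) (n : 'rV[int]_r) (x y : 'rV[R]_r) (eps : R) :
  (forall k, `|x 0 k - y 0 k| <= eps) ->
  `|lpair n x - lpair n y| <= (\sum_k `|(n 0 k)%:~R : R|) * eps.
Proof.
move=> H; rewrite /lpair -sumrB mulr_suml.
apply: le_trans (ler_norm_sum _ _ _) _; apply: ler_sum => k _.
by rewrite -mulrBr normrM ler_wpM2l.
Qed.

Lemma aux1 (R : realType) (eps C0 eta : R) :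
  eps * (2 * (C0 + 1)) = eta -> 0 < eps -> 0 <= C0 ->  2 * (C0 * eps) < eta.
Proof. move=> H1 H2 H3. nra. Qed.

Lemma aux2 (R : realType) (kap L1 eta : R) :
  kap * (2 * (L1 + 1) + eta) = eta -> 0 < kap -> 0 <= L1 -> 0 < eta ->
  kap < 1 /\ 2 * (kap * L1) < eta.
Proof. move=> H1 H2 H3 H4; split; nra. Qed.

Lemma aux3 (R : realType) (a b c e : R) :
  e <= a + b -> b <= c -> 2 * a < e -> 2 * c < e -> False.
Proof. move=> *; lra. Qed.

Lemma limit_zero (R : realType) (r : nat) (theta : 'rV[R]_r) (n : 'rV[int]_r)
    (P : R -> 'rV[R]_r -> Prop) :
  (forall eps : R, 0 < eps -> exists d0 : R, 0 < d0 /\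
     forall delta, 0 < delta -> delta < d0 ->
       exists th, dist2 th theta < eps ^+ 2 /\ P delta th) ->
  (forall d1 d2 th1 th2, 0 < d1 -> 0 < d2 -> P d1 th1 -> P d2 th2 ->
       d1 * lpair n th2 = d2 * lpair n th1) ->
  lpair n theta = 0.
Proof.
move=> HT Hp; apply/eqP; apply: contraT => Hne.
set eta := `|lpair n theta|.
have Heta : 0 < eta by rewrite normr_gt0.
set C0 := \sum_k `|(n 0 k)%:~R : R|.
have HC0 : 0 <= C0 by apply: sumr_ge0 => k _.
have HD0 : 0 < 2 * (C0 + 1) by lra.
set eps := eta / (2 * (C0 + 1)).
have Heps : 0 < eps by apply: divr_gt0.
have HepsD : eps * (2 * (C0 + 1)) = eta by rewrite divfK // gt_eqF.
have [d0 [Hd0 Hd]] := HT eps Heps.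
set d1 := d0 / 2.
have Hd1 : 0 < d1 by apply: divr_gt0.
have Hd1' : d1 < d0 by rewrite /d1; lra.
have [th1 [_ HP1]] := Hd d1 Hd1 Hd1'.
set L1 := `|lpair n th1|.
have HL1 : 0 <= L1 by apply: normr_ge0.
have HD : 0 < 2 * (L1 + 1) + eta by lra.
set kap := eta / (2 * (L1 + 1) + eta).
have Hk0 : 0 < kap by apply: divr_gt0.
have HkD : kap * (2 * (L1 + 1) + eta) = eta by rewrite divfK // gt_eqF.
have [Hk1 HkL] := aux2 HkD Hk0 HL1 Heta.
set d := d1 * kap.
have Hd0' : 0 < d by apply: mulr_gt0.
have Hdd : d < d0.
  apply: lt_trans Hd1'; by rewrite /d -[X in _ < X]mulr1 ltr_pM2l.
have [th [Hdist HP]] := Hd d Hd0' Hdd.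
have E := Hp _ _ _ _ Hd1 Hd0' HP1 HP.
have E' : lpair n th = kap * lpair n th1.
  apply: (mulfI (negbT (gt_eqF Hd1))); rewrite /= E /d; ring.
have N1 : `|lpair n th| = kap * L1 by rewrite E' normrM gtr0_norm.
have N2 := lpair_diff n (coord_bound Heps Hdist).
have N3 : eta <= `|lpair n th| + `|lpair n th - lpair n theta|.
  rewrite /eta; have := ler_normB (lpair n th) (lpair n th - lpair n theta).
  by rewrite opprB addrC subrK.
have HCe : 2 * (C0 * eps) < eta by apply: aux1.
rewrite N1 in N3.
by have := aux3 N3 N2 HkL HCe.
Qed.

Lemma twd_real (R : realType) (r : nat) (B : 'M[int]_r) (m : nat)
    (e : 'I_m -> 'rV[int]_r) (l : 'I_m -> nat) (w : forall i, 'I_(l i) -> nat)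
    (c : Sidx l -> R) (t : disk_type r (Sidx l)) (delta : R) (th : 'rV[R]_r) :
  in_Twd B e w c t delta th ->
  good (fun s : Sidx l => pstar B (e (tag s)) *+ w (tag s) (tagged s)) t /\
  exists pos len, [/\ @edges_ok R r _ t pos len,
    (forall s, lpair (e (tag s)) (pos (leg t s)) = delta * c s) & pos (vinf t) = th].
Proof.
move=> [Hok [pos [[Hd Hb] Hdeg Hleg Hv]]]; split; first by split.
exists pos, (fun e => proj1_sig (constructive_indefinite_description _ (Hd e))).
split => //.
- move=> e'; exact: (proj2 (proj2_sig (constructive_indefinite_description _ (Hd e')))).
- move=> s; have := Hleg s 0 (lexx 0); by rewrite scale0r addr0.
Qed.

Lemma twd_ok (R : realType) (r : nat) (B : 'M[int]_r) (m : nat)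
    (e : 'I_m -> 'rV[int]_r) (l : 'I_m -> nat) (w : forall i, 'I_(l i) -> nat)
    (c : Sidx l -> R) (t : disk_type r (Sidx l)) (theta : 'rV[R]_r) :
  in_Tw B e w c t theta -> exists delta th, 0 < delta /\ in_Twd B e w c t delta th.
Proof.
move=> Ht; have [d0 [Hd0 Hd]] := Ht 1 ltr01.
have H1 : 0 < d0 / 2 by apply: divr_gt0.
have H2 : d0 / 2 < d0 by lra.
have [th [_ Hth]] := Hd _ H1 H2.
by exists (d0 / 2), th.
Qed.

Unset Implicit Arguments.

Theorem lemma4p3 (R : realType) (r : nat) (B : 'M[int]_r)
    (k : nat) (g : 'I_k -> 'rV[int]_r)
    (m : nat) (e : 'I_m -> 'rV[int]_r)
    (l : 'I_m -> nat) (w : forall i, 'I_(l i) -> nat) :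
  skew_form B ->
  strictly_convex_cone R g ->
  (forall i, in_Lambda_plus R g (e i)) ->
  weight_vector_ok w ->
  generic_constraints
    (fun c : Sidx l -> R =>
       forall theta : 'rV[R]_r, at_most_one_hyperplane theta ->
       forall t : disk_type r (Sidx l),
         in_Tw B e w c t theta -> trivalent t).
Proof.
move=> _ _ _ _.
set L := fun s : Sidx l => pstar B (e (tag s)) *+ w (tag s) (tagged s).
set eS := fun s : Sidx l => e (tag s).
case: (posnP #|Sidx l|) => [HS0 | HSpos].
  exists 0%N, (fun _ _ => 0), (fun _ => 0); split; first by case.
  move=> c _ theta _ t Ht; exfalso.
  have [d [th [_ [Hok _]]]] := twd_ok Ht.
  by have := val_bound Hok; rewrite HS0.
pose s0 : Sidx l := enum_val (Ordinal HSpos).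
pose Q (kap : codeT (Sidx l)) (a : Sidx l -> R) :=
  (exists s, a s != 0) /\ forall t', good L t' -> code t' = kap ->
    forall y, @Real R r _ t' eS y -> \sum_s a s * y s = 0.
pose Pp kap a := (exists s, a s != 0) /\ ((exists a', Q kap a') -> Q kap a).
pose af kap := epsilon (inhabits (fun _ : Sidx l => 1 : R)) (Pp kap).
have HPp : forall kap, Pp kap (af kap).
  move=> kap; apply: epsilon_spec.
  case: (classic (exists a', Q kap a')) => [[a' Ha']|Hn].
    by exists a'; split => //; case: Ha'.
  exists (fun _ => 1); split; first by exists s0; rewrite oner_neq0.
  by move=> /Hn.
exists #|codeT (Sidx l)|, (fun k => af (enum_val k)), (fun _ => 0); split.
  by move=> k'; case: (HPp (enum_val k')).
move=> c Hc theta Hth t Ht.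
case: (classic (trivalent t)) => // Hnt; exfalso.
have [d [th [Hd0 Hd]]] := twd_ok Ht.
have [Hg [pos [len [He Hl Hv]]]] := twd_real Hd.
have Hok : type_ok t by case: Hg.
case: (classic (forall y, @Real R r _ t eS y)) => Hfull.
  have [n1 [n2 [Hn1 Hn2 Hneq Hp1 Hp2]]] := dim_case Hok Hnt Hfull.
  have Hz : forall n, prop_ok R t eS n -> lpair n theta = 0.
    move=> n Hpn; apply: (limit_zero (P := fun delta th => in_Twd B e w c t delta th)).
      exact: Ht.
    move=> d1 d2 th1 th2 H1 H2 P1 P2.
    have [_ [pos1 [len1 [He1 Hl1 Hv1]]]] := twd_real P1.
    have [_ [pos2 [len2 [He2 Hl2 Hv2]]]] := twd_real P2.
    rewrite -Hv1 -Hv2; exact: (Hpn d1 d2 c pos1 len1 pos2 len2).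
  by apply: Hneq; apply: Hth => //; apply: Hz.
have [y0 Hy0] : exists y0, ~ @Real R r _ t eS y0.
  by apply: not_all_ex_not.
have [a [Ha HQ]] := hyp_case (L := L) Hg (ex_intro _ y0 Hy0).
have HQt : Q (code t) (af (code t)).
  by case: (HPp (code t)) => _; apply; exists a; split.
have := Hc (enum_rank (code t)); rewrite enum_rankK.
case: HQt => _ /(_ t Hg erefl (fun s => d * c s)) H.
have := H (ex_intro _ pos (ex_intro _ len (conj He Hl))).
under eq_bigr do rewrite mulrCA.
rewrite -mulr_sumr => /eqP; rewrite mulf_eq0 (gt_eqF Hd0) /=.
by move=> ->.
Qed.
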